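(* Let $a,b,g,h>0$ and let $\theta,\psi\in\mathbb{R}$ satisfy the constraint $$(g+b\,\mathrm{ch}\,\psi-a\,\mathrm{ch}\,\theta)^2-(b\,\mathrm{sh}\,\psi-a\,\mathrm{sh}\,\theta)^2=h^2 .$$ Put $A(\theta)=2gb-2ab\,\mathrm{ch}\,\theta$, $B(\theta)=2ab\,\mathrm{sh}\,\theta$, $C(\theta)=h^2-g^2-b^2-a^2+2ag\,\mathrm{ch}\,\theta$, and assume $A(\theta)+C(\theta)\neq 0$. Then $B(\theta)^2+C(\theta)^2-A(\theta)^2\ge 0$ and, for one choice of the sign $\pm$, $$\psi=2\,\mathrm{artanh}\,\frac{-B(\theta)\pm\sqrt{B(\theta)^2+C(\theta)^2-A(\theta)^2}}{A(\theta)+C(\theta)} .$$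
   Context: $\mathrm{ch},\mathrm{sh}$ denote the hyperbolic cosine and sine and $\mathrm{artanh}$ the inverse hyperbolic tangent. Interpretation: a Minkowskian planar 4R linkage in $\mathbb{R}^2$ with Lorentzian form $\langle u,v\rangle=u_1v_1-u_2v_2$ has fixed pivots $O=(0,0)$, $C=(g,0)$, moving pivots $A=(a\,\mathrm{ch}\,\theta,a\,\mathrm{sh}\,\theta)$ (input crank angle $\theta$) and $B=(g+b\,\mathrm{ch}\,\psi,b\,\mathrm{sh}\,\psi)$ (output crank angle $\psi$), and the coupler condition is $\langle B-A,B-A\rangle=h^2$, which is the displayed constraint. *)

(* Defs.v *)
From Stdlib Require Import Reals.
Open Scope R_scope.

Definition artanh (x : R) : R := / 2 * ln ((1 + x) / (1 - x)).

(* Main.v *)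
Require Import Defs.
From Stdlib Require Import Reals Lra Psatz.
Open Scope R_scope.

Lemma ch2sh2 x : cosh x ^ 2 - sinh x ^ 2 = 1.
Proof.
  unfold cosh, sinh. rewrite exp_Ropp. assert (H := exp_pos x). field. lra.
Qed.

Theorem mainTheorem3 (a b g h theta psi : R) :
  0 < a -> 0 < b -> 0 < g -> 0 < h ->
  (g + b * cosh psi - a * cosh theta) ^ 2 - (b * sinh psi - a * sinh theta) ^ 2 = h ^ 2 ->
  let A := 2 * g * b - 2 * a * b * cosh theta in
  let B := 2 * a * b * sinh theta in
  let C := h ^ 2 - g ^ 2 - b ^ 2 - a ^ 2 + 2 * a * g * cosh theta in
  A + C <> 0 ->
  0 <= B ^ 2 + C ^ 2 - A ^ 2 /\
  exists s : R, (s = 1 \/ s = -1) /\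
    let x := (- B + s * sqrt (B ^ 2 + C ^ 2 - A ^ 2)) / (A + C) in
    -1 < x < 1 /\ psi = 2 * artanh x.
Proof.
  intros Ha Hb Hg Hh H A B C HAC.
  assert (Hp := ch2sh2 psi). assert (Ht := ch2sh2 theta).
  assert (K : A * cosh psi + B * sinh psi = C).
  { unfold A, B, C. rewrite <- H.
    assert (E : (g + b * cosh psi - a * cosh theta) ^ 2 - (b * sinh psi - a * sinh theta) ^ 2
      = g^2 + b^2 * (cosh psi ^ 2 - sinh psi ^ 2) + a^2 * (cosh theta ^ 2 - sinh theta ^ 2)
        + 2*g*b*cosh psi - 2*g*a*cosh theta - 2*a*b*cosh psi*cosh theta
        + 2*a*b*sinh psi*sinh theta) by ring.
    rewrite E, Hp, Ht. ring. }
  set (e := exp psi). assert (He : 0 < e) by apply exp_pos.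
  set (t := (e - 1) / (e + 1)).
  assert (Hcp : cosh psi = (e + / e) / 2) by (unfold cosh; rewrite exp_Ropp; reflexivity).
  assert (Hsp : sinh psi = (e - / e) / 2) by (unfold sinh; rewrite exp_Ropp; reflexivity).
  assert (Q : (A+C)*t^2 + 2*B*t + (A-C) = 0).
  { assert (Q' : (A+C)*t^2 + 2*B*t + (A-C) = 4*e/(e+1)^2 * (A*cosh psi + B*sinh psi - C)).
    { rewrite Hcp, Hsp. unfold t. field. lra. }
    rewrite Q', K. ring. }
  assert (E2 : ((A+C)*t + B)^2 = B ^ 2 + C ^ 2 - A ^ 2).
  { assert (E3 : ((A+C)*t + B)^2 - (B ^ 2 + C ^ 2 - A ^ 2) = (A+C)*((A+C)*t^2 + 2*B*t + (A-C))) by ring.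
    rewrite Q in E3. lra. }
  assert (Tr : -1 < t < 1) by (unfold t; split; apply Rmult_lt_reg_r with (e+1); try lra; field_simplify; lra).
  assert (At : psi = 2 * artanh t).
  { unfold artanh. replace ((1 + t) / (1 - t)) with e by (unfold t; field; lra).
    unfold e. rewrite ln_exp. field. }
  split. { rewrite <- E2. apply pow2_ge_0. }
  destruct (Rle_dec 0 ((A+C)*t + B)) as [Hw|Hw].
  - exists 1. split; [left; reflexivity|]. cbv zeta.
    rewrite <- E2, sqrt_pow2 by exact Hw.
    replace ((- B + 1 * ((A + C) * t + B)) / (A + C)) with t by (field; exact HAC).
    auto.
  - exists (-1). split; [right; reflexivity|]. cbv zeta.
    replace (((A+C)*t + B)^2) with ((-((A+C)*t + B))^2) in E2 by ring.
    rewrite <- E2, sqrt_pow2 by lra.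
    replace ((- B + -1 * - ((A + C) * t + B)) / (A + C)) with t by (field; exact HAC).
    auto.
Qed.
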